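(* Fix a class table and a security lattice as described in the context. Let $\Gamma$ be a typing context and $T$ a type. Suppose an expression $e$ that contains no abstract expressions is obtained from a single abstract expression $\mathit{eA}:[\Gamma;T]$ by a finite sequence of applications of the refinement rules (R1)–(R8) listed in the context, where each step is applied to some occurrence of an abstract expression anywhere inside the current expression. Then $e$ is well typed in SIFO with $\Gamma \vdash e : T$.
   Context: Security levels form a bounded upper semi-lattice $(L,\le)$ with least element $\bot$; $\mathit{lub}$ denotes least upper bound. Type modifiers: $\mathit{mdf}\in\{\mathtt{mut},\mathtt{imm},\mathtt{capsule},\mathtt{read}\}$, ordered by $\mathtt{capsule}\le \mathit{mdf}\le\mathtt{read}$ for every $\mathit{mdf}$ (reflexive; $\mathtt{mut}$ and $\mathtt{imm}$ incomparable). A type is $T = s\ \mathit{mdf}\ C$ with $s\in L$ and $C$ a class/interface name; $\mathit{sec}(T)=s$, $\mathit{mdf}(T)=\mathit{mdf}$, $\mathit{class}(T)=C$. A fixed class table gives classes $\mathtt{class}\ C\ \mathtt{implements}\ \overline{C}\ \{\overline F\ \overline{MD}\}$ and interfaces $\mathtt{interface}\ C\ \mathtt{extends}\ \overline C\ \{\overline{MH}\}$; $C\le C'$ is the reflexive–transitive closure of implements/extends. Fields have the form $s\ \mathtt{mut}\ C\ f$ or $s\ \mathtt{imm}\ C\ f$; $\mathit{fields}(C)$ is the ordered list $T_1 f_1\dots T_n f_n$ of fields of $C$. Method headers have the form $s\ \mathit{mdf}\ \mathtt{method}\ T\ m(T_1 x_1,\dots,T_n x_n)$. Subtyping: $s\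 \mathit{mdf}\ C\le s\ \mathit{mdf}'\ C'$ iff $C\le C'$ and $\mathit{mdf}\le\mathit{mdf}'$. For $T=s'\ \mathit{mdf}\ C$, $T[s]=\mathit{lub}(s,s')\ \mathit{mdf}\ C$, defined only if $s\le s'$ or $s'\le s$. The partial operation $\triangleright$ on modifiers: $\mathtt{mut}\triangleright \mathit{mdf}=\mathtt{capsule}\triangleright\mathit{mdf}=\mathit{mdf}$; $\mathtt{imm}\triangleright\mathit{mdf}=\mathit{mdf}\triangleright\mathtt{imm}=\mathtt{imm}$; $\mathtt{read}\triangleright\mathtt{mut}=\mathtt{read}$. $\mathit{methTypes}(C,m)$: if $s\ \mathit{mdf}\ \mathtt{method}\ T\ m(T_1x_1\dots T_nx_n)$ is declared in $C$ and $T_0=s\ \mathit{mdf}\ C$, then for every $s'\in L$ (where defined) it contains $T_0[s']\dots T_n[s']\to T[s']$, the same signature with every $\mathtt{mut}$ replaced by $\mathtt{capsule}$, and the same signature with every $\mathtt{read}$ replaced by $\mathtt{imm}$ and every $\mathtt{mut}$ by $\mathtt{capsule}$. Expressions (core fragment): $e ::= \mathit{eA}\mid x\mid e_0.f=e_1\mid e.f\mid e_0.m(e_1,\dots,e_n)\mid \mathtt{new}\ s\ C(e_1,\dots,e_n)$, where $\mathit{eA}$ ranges over abstract expressions, each annotated $\mathit{eA}:[\Gamma;T]$. A typing context is $\Gamma = x_1:T_1,\dots,x_n:T_n$; $\Gamma[\mathtt{mut}\backslash\mathtt{read}]$ replaces each $\mathtt{mut}$ modifier in $\Gamma$ by $\mathtt{read}$.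 SIFO typing ($\Gamma\vdash e:T$) is the least relation closed under: (Subsumption) $\Gamma\vdash e:T'$, $T'\le T$ $\Rightarrow$ $\Gamma\vdash e:T$; (T-Var) $\Gamma\vdash x:\Gamma(x)$; (Field Access) $\Gamma\vdash e_0:s_0\ \mathit{mdf}_0\ C_0$, $s_1\ \mathit{mdf}_1\ C_1\ f\in\mathit{fields}(C_0)$ $\Rightarrow$ $\Gamma\vdash e_0.f:\mathit{lub}(s_0,s_1)\ (\mathit{mdf}_0\triangleright\mathit{mdf}_1)\ C_1$; (Field Assign) $\Gamma\vdash e_0:s_0\ \mathtt{mut}\ C_0$, $\Gamma\vdash e_1:\mathit{lub}(s_0,s)\ \mathit{mdf}\ C$, $s\ \mathit{mdf}\ C\ f\in\mathit{fields}(C_0)$ $\Rightarrow$ $\Gamma\vdash e_0.f=e_1:\mathit{lub}(s_0,s)\ \mathit{mdf}\ C$; (Call) $\Gamma\vdash e_i:T_i$ for $i=0..n$, $T_0\dots T_n\to T\in\mathit{methTypes}(\mathit{class}(T_0),m)$, $\mathit{sec}(T)\ge\mathit{sec}(T_0)$, and $\mathit{sec}(T_i)\ge\mathit{sec}(T_0)$ whenever $\mathit{mdf}(T_i)\in\{\mathtt{mut},\mathtt{capsule}\}$ $\Rightarrow$ $\Gamma\vdash e_0.m(e_1\dots e_n):T$; (New) $\mathit{fields}(C)=T_1f_1\dots T_nf_n$, $\Gamma\vdash e_i:T_i[s]$ for all $i$ $\Rightarrow$ $\Gamma\vdash\mathtt{new}\ s\ C(e_1\dots e_n):s\ \mathtt{mut}\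 C$; (Prom) $\Gamma[\mathtt{mut}\backslash\mathtt{read}]\vdash e:s\ \mathtt{mut}\ C$ $\Rightarrow$ $\Gamma\vdash e:s\ \mathtt{capsule}\ C$; (Sec-Prom) $s'\le s$, $\Gamma\vdash e:s'\ \mathit{mdf}\ C$, $\mathit{mdf}\in\{\mathtt{imm},\mathtt{capsule}\}$ $\Rightarrow$ $\Gamma\vdash e:s\ \mathit{mdf}\ C$. Refinement rules (new abstract expressions are fresh, with the stated annotations): (R1 Variable) $\mathit{eA}:[\Gamma;T]$ becomes $x$ if $\Gamma(x)=T$. (R2 Field Assignment) $\mathit{eA}:[\Gamma;s_1\ \mathit{mdf}\ C]$ becomes $\mathit{eA}_0.f=\mathit{eA}_1$ with $\mathit{eA}_0:[\Gamma;s_0\ \mathtt{mut}\ C_0]$, $\mathit{eA}_1:[\Gamma;s_1\ \mathit{mdf}\ C]$, if $s\ \mathit{mdf}\ C\ f\in\mathit{fields}(C_0)$ and $s_1=\mathit{lub}(s_0,s)$. (R3 Field Access) $\mathit{eA}:[\Gamma;s\ \mathit{mdf}\ C]$ becomes $\mathit{eA}_0.f$ with $\mathit{eA}_0:[\Gamma;s_0\ \mathit{mdf}_0\ C_0]$, if $s_1\ \mathit{mdf}_1\ C\ f\in\mathit{fields}(C_0)$, $s=\mathit{lub}(s_0,s_1)$, $\mathit{mdf}_0\triangleright\mathit{mdf}_1=\mathit{mdf}$. (R4 Method Call) $\mathit{eA}:[\Gamma;T]$ becomes $\mathit{eA}_0.m(\mathit{eA}_1,\dots,\mathit{eA}_n)$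 with $\mathit{eA}_i:[\Gamma;T_i]$, if $T_0\dots T_n\to T\in\mathit{methTypes}(\mathit{class}(T_0),m)$, $\mathit{sec}(T)\ge\mathit{sec}(T_0)$, and for all $i\in\{1..n\}$ with $\mathit{mdf}(T_i)\in\{\mathtt{mut},\mathtt{capsule}\}$, $\mathit{sec}(T_i)\ge\mathit{sec}(T_0)$. (R5 Constructor) $\mathit{eA}:[\Gamma;s\ \mathtt{mut}\ C]$ becomes $\mathtt{new}\ s\ C(\mathit{eA}_1\dots\mathit{eA}_n)$ with $\mathit{eA}_i:[\Gamma;T_i[s]]$, if $\mathit{fields}(C)=T_1f_1\dots T_nf_n$. (R6 Subsumption) $\mathit{eA}:[\Gamma;T]$ becomes $\mathit{eA}_1:[\Gamma;T']$ if $T'\le T$. (R7 Security Promotion) $\mathit{eA}:[\Gamma;s\ \mathit{mdf}\ C]$ becomes $\mathit{eA}_1:[\Gamma;s'\ \mathit{mdf}\ C]$ if $\mathit{mdf}\in\{\mathtt{capsule},\mathtt{imm}\}$ and $s'\le s$. (R8 Modifier Promotion) $\mathit{eA}:[\Gamma;s\ \mathtt{capsule}\ C]$ becomes $\mathit{eA}_1:[\Gamma[\mathtt{mut}\backslash\mathtt{read}];s\ \mathtt{mut}\ C]$. *)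

(* Defs.v *)
From HB Require Import structures.
From mathcomp Require Import all_boot all_order.
From Stdlib Require List Relations.

Set Implicit Arguments.
Unset Strict Implicit.
Unset Printing Implicit Defensive.

Import Order.TTheory.
Local Open Scope order_scope.

Definition var := nat.
Definition fname := nat.
Definition mname := nat.
Definition cname := nat.

Inductive mdf := Mut | Imm | Capsule | Read.

Definition mdf_le (a b : mdf) : Prop := a = b \/ a = Capsule \/ b = Read.

Definition mdf_tri (a b : mdf) : option mdf :=
  match a, b with
  | Mut, _ => Some b
  | Capsule, _ => Some b
  | Imm, _ => Some Imm
  | _, Imm => Some Imm
  | Read, Mut => Some Read
  | _, _ => None
  end.

Inductive fmdf := FMut | FImm.
Definition mdf_of_fmdf (f : fmdf) : mdf := match f with FMut => Mut | FImm => Imm end.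

Section SIFO.
Context {disp : Order.disp_t} (L : tbJoinSemilatticeType disp).

Record ty := Ty { sec : L; tmdf : mdf; tcls : cname }.

Record fdecl := FD { fd_sec : L; fd_mdf : fmdf; fd_cls : cname; fd_name : fname }.
Definition fd_ty (fd : fdecl) : ty := Ty (fd_sec fd) (mdf_of_fmdf (fd_mdf fd)) (fd_cls fd).

Record mheader := MH { mh_sec : L; mh_mdf : mdf; mh_ret : ty; mh_name : mname;
                       mh_params : list (ty * var) }.

(* class / interface declarations (method bodies are irrelevant here) *)
Inductive decl :=
  | DClass (impls : list cname) (fields : list fdecl) (meths : list mheader)
  | DInterface (exts : list cname) (meths : list mheader).

Definition classtable := cname -> option decl.

Definition ctx := list (var * ty).

Fixpoint lookup (G : ctx) (x : var) : option ty :=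
  match G with
  | nil => None
  | (y, T) :: G' => if x == y then Some T else lookup G' x
  end.

Definition mut_to_read (T : ty) : ty :=
  Ty (sec T) (match tmdf T with Mut => Read | m => m end) (tcls T).

Definition ctx_mut_read (G : ctx) : ctx := map (fun p => (p.1, mut_to_read p.2)) G.

Definition lift (s : L) (T : ty) : option ty :=
  if (s <= sec T) || (sec T <= s) then Some (Ty (s `|` sec T) (tmdf T) (tcls T))
  else None.

Fixpoint omap_list {A B : Type} (f : A -> option B) (l : list A) : option (list B) :=
  match l with
  | nil => Some nil
  | x :: r => match f x, omap_list f r with
              | Some y, Some r' => Some (y :: r')
              | _, _ => None
              end
  end.

Definition sig := (list ty * ty)%type.

Definition map_sig (g : ty -> ty) (sg : sig) : sig := (map g sg.1, g sg.2).

Definition mut_to_capsule (T : ty) : ty :=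
  Ty (sec T) (match tmdf T with Mut => Capsule | m => m end) (tcls T).

Definition read_imm_mut_capsule (T : ty) : ty :=
  Ty (sec T) (match tmdf T with Mut => Capsule | Read => Imm | m => m end) (tcls T).

Definition lift_sig (s : L) (sg : sig) : option sig :=
  match omap_list (lift s) sg.1, lift s sg.2 with
  | Some ts, Some t => Some (ts, t)
  | _, _ => None
  end.

Section CT.
Variable CT : classtable.

Definition fields (C : cname) : option (list fdecl) :=
  match CT C with Some (DClass _ fs _) => Some fs | _ => None end.

Definition field_in (fd : fdecl) (C : cname) : Prop :=
  exists fs, fields C = Some fs /\ List.In fd fs.

Definition methods (C : cname) : list mheader :=
  match CT C with
  | Some (DClass _ _ ms) => ms
  | Some (DInterface _ ms) => ms
  | None => nil
  end.

Definition direct_super (C C' : cname) : Prop :=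
  match CT C with
  | Some (DClass impls _ _) => List.In C' impls
  | Some (DInterface exts _) => List.In C' exts
  | None => False
  end.

Definition csub : cname -> cname -> Prop :=
  Relation_Operators.clos_refl_trans cname direct_super.

Definition subty (T T' : ty) : Prop :=
  sec T = sec T' /\ csub (tcls T) (tcls T') /\ mdf_le (tmdf T) (tmdf T').

Definition methTypes (C : cname) (m : mname) (sg : sig) : Prop :=
  exists mh, List.In mh (methods C) /\ mh_name mh = m /\
    exists s' lsg,
      lift_sig s' (Ty (mh_sec mh) (mh_mdf mh) C :: map fst (mh_params mh), mh_ret mh)
        = Some lsg /\
      (sg = lsg \/ sg = map_sig mut_to_capsule lsg \/
       sg = map_sig read_imm_mut_capsule lsg).

(* Expressions (core fragment); abstract expressions carry their annotation *)
Inductive expr :=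
  | EAbs (G : ctx) (T : ty)
  | EVar (x : var)
  | EAssign (e0 : expr) (f : fname) (e1 : expr)
  | EField (e : expr) (f : fname)
  | ECall (e0 : expr) (m : mname) (es : list expr)
  | ENew (s : L) (C : cname) (es : list expr).

Fixpoint concrete (e : expr) : bool :=
  match e with
  | EAbs _ _ => false
  | EVar _ => true
  | EAssign e0 _ e1 => concrete e0 && concrete e1
  | EField e0 _ => concrete e0
  | ECall e0 _ es =>
      concrete e0 && (fix go (l : list expr) : bool :=
                        match l with nil => true | x :: r => concrete x && go r end) es
  | ENew _ _ es =>
      (fix go (l : list expr) : bool :=
         match l with nil => true | x :: r => concrete x && go r end) es
  end.

Definition is_mut_or_capsule (m : mdf) : Prop := m = Mut \/ m = Capsule.
Definition is_imm_or_capsule (m : mdf) : Prop := m = Imm \/ m = Capsule.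

Inductive typing : ctx -> expr -> ty -> Prop :=
  | T_Sub G e T T' :
      typing G e T' -> subty T' T -> typing G e T
  | T_Var G x T :
      lookup G x = Some T -> typing G (EVar x) T
  | T_Field G e0 s0 m0 C0 fd m :
      typing G e0 (Ty s0 m0 C0) -> field_in fd C0 ->
      mdf_tri m0 (mdf_of_fmdf (fd_mdf fd)) = Some m ->
      typing G (EField e0 (fd_name fd)) (Ty (s0 `|` fd_sec fd) m (fd_cls fd))
  | T_Assign G e0 e1 s0 C0 fd :
      typing G e0 (Ty s0 Mut C0) ->
      typing G e1 (Ty (s0 `|` fd_sec fd) (mdf_of_fmdf (fd_mdf fd)) (fd_cls fd)) ->
      field_in fd C0 ->
      typing G (EAssign e0 (fd_name fd) e1)
             (Ty (s0 `|` fd_sec fd) (mdf_of_fmdf (fd_mdf fd)) (fd_cls fd))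
  | T_Call G e0 es m T0 Ts T :
      typing G e0 T0 ->
      List.Forall2 (typing G) es Ts ->
      methTypes (tcls T0) m (T0 :: Ts, T) ->
      sec T0 <= sec T ->
      (forall Ti, List.In Ti Ts -> is_mut_or_capsule (tmdf Ti) -> sec T0 <= sec Ti) ->
      typing G (ECall e0 m es) T
  | T_New G s C es fs Ts :
      fields C = Some fs ->
      omap_list (lift s) (map fd_ty fs) = Some Ts ->
      List.Forall2 (typing G) es Ts ->
      typing G (ENew s C es) (Ty s Mut C)
  | T_Prom G e s C :
      typing (ctx_mut_read G) e (Ty s Mut C) -> typing G e (Ty s Capsule C)
  | T_SecProm G e s s' m C :
      s' <= s -> typing G e (Ty s' m C) -> is_imm_or_capsule m ->
      typing G e (Ty s m C).

Inductive refine_root : expr -> expr -> Prop :=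
  | R1_Var G T x :
      lookup G x = Some T -> refine_root (EAbs G T) (EVar x)
  | R2_Assign G s0 C0 fd s1 :
      field_in fd C0 -> s1 = s0 `|` fd_sec fd ->
      refine_root (EAbs G (Ty s1 (mdf_of_fmdf (fd_mdf fd)) (fd_cls fd)))
        (EAssign (EAbs G (Ty s0 Mut C0)) (fd_name fd)
                 (EAbs G (Ty s1 (mdf_of_fmdf (fd_mdf fd)) (fd_cls fd))))
  | R3_Field G s m s0 m0 C0 fd :
      field_in fd C0 -> s = s0 `|` fd_sec fd ->
      mdf_tri m0 (mdf_of_fmdf (fd_mdf fd)) = Some m ->
      refine_root (EAbs G (Ty s m (fd_cls fd)))
        (EField (EAbs G (Ty s0 m0 C0)) (fd_name fd))
  | R4_Call G T T0 Ts m :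
      methTypes (tcls T0) m (T0 :: Ts, T) ->
      sec T0 <= sec T ->
      (forall Ti, List.In Ti Ts -> is_mut_or_capsule (tmdf Ti) -> sec T0 <= sec Ti) ->
      refine_root (EAbs G T) (ECall (EAbs G T0) m (map (EAbs G) Ts))
  | R5_New G s C fs Ts :
      fields C = Some fs ->
      omap_list (lift s) (map fd_ty fs) = Some Ts ->
      refine_root (EAbs G (Ty s Mut C)) (ENew s C (map (EAbs G) Ts))
  | R6_Sub G T T' :
      subty T' T -> refine_root (EAbs G T) (EAbs G T')
  | R7_SecProm G s s' m C :
      is_imm_or_capsule m -> s' <= s ->
      refine_root (EAbs G (Ty s m C)) (EAbs G (Ty s' m C))
  | R8_ModProm G s C :
      refine_root (EAbs G (Ty s Capsule C)) (EAbs (ctx_mut_read G) (Ty s Mut C)).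

Inductive refine_step : expr -> expr -> Prop :=
  | RS_Root e e' : refine_root e e' -> refine_step e e'
  | RS_Assign0 e0 e0' f e1 :
      refine_step e0 e0' -> refine_step (EAssign e0 f e1) (EAssign e0' f e1)
  | RS_Assign1 e0 f e1 e1' :
      refine_step e1 e1' -> refine_step (EAssign e0 f e1) (EAssign e0 f e1')
  | RS_Field e e' f :
      refine_step e e' -> refine_step (EField e f) (EField e' f)
  | RS_Call0 e0 e0' m es :
      refine_step e0 e0' -> refine_step (ECall e0 m es) (ECall e0' m es)
  | RS_CallArg e0 m l1 e e' l2 :
      refine_step e e' ->
      refine_step (ECall e0 m (l1 ++ e :: l2)) (ECall e0 m (l1 ++ e' :: l2))
  | RS_NewArg s C l1 e e' l2 :
      refine_step e e' ->
      refine_step (ENew s C (l1 ++ e :: l2)) (ENew s C (l1 ++ e' :: l2)).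

Definition refines : expr -> expr -> Prop :=
  Relation_Operators.clos_refl_trans expr refine_step.

End CT.
End SIFO.

(* Main.v *)
Require Import Defs.
From mathcomp Require Import all_boot all_order.
From Stdlib Require List Relations.

Set Implicit Arguments.
Unset Strict Implicit.
Unset Printing Implicit Defensive.
Import Order.TTheory.
Local Open Scope order_scope.

Section Proof.
Context {disp : Order.disp_t} (L : tbJoinSemilatticeType disp).
Variable CT : classtable L.

Inductive typingA : ctx L -> expr L -> ty L -> Prop :=
  | TA_Abs G T : typingA G (EAbs G T) T
  | TA_Sub G e T T' :
      typingA G e T' -> subty CT T' T -> typingA G e T
  | TA_Var G x T :
      lookup G x = Some T -> typingA G (EVar L x) T
  | TA_Field G e0 s0 m0 C0 fd m :
      typingA G e0 (Ty s0 m0 C0) -> field_in CT fd C0 ->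
      mdf_tri m0 (mdf_of_fmdf (fd_mdf fd)) = Some m ->
      typingA G (EField e0 (fd_name fd)) (Ty (s0 `|` fd_sec fd) m (fd_cls fd))
  | TA_Assign G e0 e1 s0 C0 fd :
      typingA G e0 (Ty s0 Mut C0) ->
      typingA G e1 (Ty (s0 `|` fd_sec fd) (mdf_of_fmdf (fd_mdf fd)) (fd_cls fd)) ->
      field_in CT fd C0 ->
      typingA G (EAssign e0 (fd_name fd) e1)
             (Ty (s0 `|` fd_sec fd) (mdf_of_fmdf (fd_mdf fd)) (fd_cls fd))
  | TA_Call G e0 es m T0 Ts T :
      typingA G e0 T0 ->
      typingAs G es Ts ->
      methTypes CT (tcls T0) m (T0 :: Ts, T) ->
      sec T0 <= sec T ->
      (forall Ti, List.In Ti Ts -> is_mut_or_capsule (tmdf Ti) -> sec T0 <= sec Ti) ->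
      typingA G (ECall e0 m es) T
  | TA_New G s C es fs Ts :
      fields CT C = Some fs ->
      omap_list (Defs.lift s) (map (@fd_ty _ L) fs) = Some Ts ->
      typingAs G es Ts ->
      typingA G (ENew s C es) (Ty s Mut C)
  | TA_Prom G e s C :
      typingA (ctx_mut_read G) e (Ty s Mut C) -> typingA G e (Ty s Capsule C)
  | TA_SecProm G e s s' m C :
      s' <= s -> typingA G e (Ty s' m C) -> is_imm_or_capsule m ->
      typingA G e (Ty s m C)
with typingAs : ctx L -> list (expr L) -> list (ty L) -> Prop :=
  | TAs_nil G : typingAs G nil nil
  | TAs_cons G e es T Ts : typingA G e T -> typingAs G es Ts ->
      typingAs G (e :: es) (T :: Ts).

Scheme typingA_mut := Induction for typingA Sort Prop
with typingAs_mut := Induction for typingAs Sort Prop.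

Fixpoint concs (l : list (expr L)) : bool :=
  match l with nil => true | x :: r => concrete x && concs r end.


Lemma to_typing : forall G e T, typingA G e T -> concrete e -> typing CT G e T.
Proof.
  apply (@typingA_mut (fun (G : ctx L) (e : expr L) (T : ty L) _ => concrete e -> typing CT G e T)
                     (fun (G : ctx L) (es : list (expr L)) (Ts : list (ty L)) _ => concs es -> List.Forall2 (typing CT G) es Ts)).
  - by [].
  - intros; eapply T_Sub; eauto.
  - intros; constructor; auto.
  - intros; eapply T_Field; eauto.
  - move=> G e0 e1 s0 C0 fd _ IH0 _ IH1 Hf /= /andP [c0 c1].
    eapply T_Assign; eauto.
  - move=> G e0 es m T0 Ts T _ IH0 _ IHs Hm Hs Hi /=.
    change (concrete e0 && concs es -> typing CT G (ECall e0 m es) T).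
    move=> /andP [c0 cs]; eapply T_Call; eauto.
  - move=> G s C es fs Ts Hf Ho _ IHs /=.
    change (concs es -> typing CT G (ENew s C es) (Ty s Mut C)).
    move=> cs; eapply T_New; eauto.
  - intros; eapply T_Prom; eauto.
  - intros; eapply T_SecProm; eauto.
  - intros; constructor.
  - move=> G e es T Ts _ IH _ IHs /= /andP [c cs]; constructor; auto.
Qed.

Lemma abs_list G Ts : typingAs G (map (EAbs G) Ts) Ts.
Proof. elim: Ts => [|T Ts IH] /=; constructor; auto; constructor. Qed.

Lemma root_pres G T e' : refine_root CT (EAbs G T) e' -> typingA G e' T.
Proof.
  intro H; inversion H; subst.
  - constructor; auto.
  - eapply TA_Assign; eauto; constructor.
  - eapply TA_Field; eauto; constructor.
  - eapply TA_Call; eauto; [constructor | apply abs_list].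
  - eapply TA_New; eauto; apply abs_list.
  - eapply TA_Sub; eauto; constructor.
  - eapply TA_SecProm; eauto; constructor.
  - eapply TA_Prom; constructor.
Qed.

Lemma root_abs e e' : refine_root CT e e' -> exists G T, e = EAbs G T.
Proof. intro H; inversion H; eauto. Qed.

Lemma list_pres G e e' l1 l2 Ts :
  (forall T, typingA G e T -> typingA G e' T) ->
  typingAs G (l1 ++ e :: l2) Ts -> typingAs G (l1 ++ e' :: l2) Ts.
Proof.
  move=> He; elim: l1 Ts => [|x l1 IH] Ts /= H; inversion H; subst; constructor; auto.
Qed.

Lemma step_pres e e' : refine_step CT e e' ->
  forall G T, typingA G e T -> typingA G e' T.
Proof.
  induction 1; intros G T Ht.
  - destruct (root_abs H) as [G0 [T0 ->]].
    remember (EAbs G0 T0) as x eqn:Ex; induction Ht; try discriminate.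
    + injection Ex; intros; subst; apply root_pres; auto.
    + eapply TA_Sub; eauto.
    + eapply TA_Prom; eauto.
    + eapply TA_SecProm; eauto.
  - remember (EAssign e0 f e1) as x eqn:Ex; induction Ht; try discriminate.
    + eapply TA_Sub; eauto.
    + injection Ex; intros; subst; eapply TA_Assign; eauto.
    + eapply TA_Prom; eauto.
    + eapply TA_SecProm; eauto.
  - remember (EAssign e0 f e1) as x eqn:Ex; induction Ht; try discriminate.
    + eapply TA_Sub; eauto.
    + injection Ex; intros; subst; eapply TA_Assign; eauto.
    + eapply TA_Prom; eauto.
    + eapply TA_SecProm; eauto.
  - remember (EField e f) as x eqn:Ex; induction Ht; try discriminate.
    + eapply TA_Sub; eauto.
    + injection Ex; intros; subst; eapply TA_Field; eauto.
    + eapply TA_Prom; eauto.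
    + eapply TA_SecProm; eauto.
  - remember (ECall e0 m es) as x eqn:Ex; induction Ht; try discriminate.
    + eapply TA_Sub; eauto.
    + injection Ex; intros; subst; eapply TA_Call; eauto.
    + eapply TA_Prom; eauto.
    + eapply TA_SecProm; eauto.
  - remember (ECall e0 m (l1 ++ e :: l2)) as x eqn:Ex; induction Ht; try discriminate.
    + eapply TA_Sub; eauto.
    + injection Ex; intros; subst.
      eapply TA_Call; [eassumption | eapply list_pres; [exact (IHrefine_step G) | eassumption] | eassumption ..].
    + eapply TA_Prom; eauto.
    + eapply TA_SecProm; eauto.
  - remember (ENew s C (l1 ++ e :: l2)) as x eqn:Ex; induction Ht; try discriminate.
    + eapply TA_Sub; eauto.
    + injection Ex; intros; subst.
      eapply TA_New; [eassumption | eassumption | eapply list_pres; [exact (IHrefine_step G) | eassumption]].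
    + eapply TA_Prom; eauto.
    + eapply TA_SecProm; eauto.
Qed.

Lemma refines_pres e e' : refines CT e e' ->
  forall G T, typingA G e T -> typingA G e' T.
Proof.
  induction 1; intros; eauto.
  eapply step_pres; eauto.
Qed.

End Proof.

Theorem theorem1 (disp : Order.disp_t) (L : tbJoinSemilatticeType disp)
  (CT : classtable L) (G : ctx L) (T : ty L) (e : expr L) :
  refines CT (EAbs G T) e -> concrete e -> typing CT G e T.
Proof.
  move=> H c; apply: to_typing => //.
  apply: (refines_pres H); constructor.
Qed.
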